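(* Let $\kappa$ be an infinite cardinal and let $(F_\xi)_{\xi\in\kappa}$ be a family of nonempty finite sets. Then there exists a set $X$ such that (i) $|\{\xi\in\kappa:|F_\xi\cap X|=1\}|=\kappa$; and moreover $X$ can be chosen so that, in addition to (i): (ii) $|X|$ is equal to $1$, to $\mathrm{cf}(\kappa)$, or to $\kappa$; (iii) every subset $X'\subseteq X$ with $|X'|=|X|$ also satisfies $|\{\xi\in\kappa:|F_\xi\cap X'|=1\}|=\kappa$; (iv) for each $x\in X$ there is at least one $\xi\in\kappa$ with $F_\xi\cap X=\{x\}$.
   Context: $\mathrm{cf}(\kappa)$ denotes the cofinality of the cardinal $\kappa$. *)

(* Defs.v *)
From HB Require Import structures.
From mathcomp Require Import all_boot all_order all_algebra.
From mathcomp Require Import all_classical.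
Set Implicit Arguments. Unset Strict Implicit. Unset Printing Implicit Defensive.
Local Open Scope classical_set_scope.
Local Open Scope card_scope.

(* The infinite cardinal kappa is represented, as in von Neumann set theory,
   by the set of ordinals below it: a type K with a strict well-order [lt]
   which is an initial ordinal (no proper initial segment is equinumerous
   with the whole). *)
Definition initial_ordinal (K : Type) (lt : K -> K -> Prop) : Prop :=
  [/\ (forall a, ~ lt a a),
      (forall a b c, lt a b -> lt b c -> lt a c),
      (forall a b, [\/ lt a b, a = b | lt b a]),
      well_founded lt &
      (forall a, ~ ([set: K] #<= [set b | lt b a]))].

Definition cofinal (K : Type) (lt : K -> K -> Prop) (C : set K) : Prop :=
  forall a, exists2 c, C c & (lt a c \/ a = c).

Definition card_is_cf (K : Type) (lt : K -> K -> Prop) (T : Type) (X : set T) : Prop :=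
  exists C : set K, [/\ cofinal lt C,
                        (forall C' : set K, cofinal lt C' -> C #<= C') &
                        X #= C].

Definition kappa_many_singletons (K T : Type) (F : K -> set T) (X : set T) : Prop :=
  [set xi | (F xi `&` X) #= [set: unit]] #= [set: K].

(* Main.v *)
Require Import Defs.
From HB Require Import structures.
From mathcomp Require Import all_boot all_order all_algebra.
From mathcomp Require Import all_classical.
Set Implicit Arguments. Unset Strict Implicit. Unset Printing Implicit Defensive.
Local Open Scope classical_set_scope.
Local Open Scope card_scope.

Definition injle {T U} (A : set T) (B : set U) :=
  exists f : T -> U, (forall x, A x -> B (f x)) /\
    (forall x y, A x -> A y -> f x = f y -> x = y).

Section WOC.
Variables (W V : Type) (R : W -> W -> Prop).
Hypothesis wfR : well_founded R.
Hypothesis totR : forall a b, [\/ R a b, a = b | R b a].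

Lemma wf_least (A : set W) : A !=set0 -> exists2 w, A w & forall y, A y -> ~ R y w.
Proof.
move=> [a Aa]; elim/(well_founded_ind wfR): a Aa => a IH Aa.
have [[y [Ay Rya]]|H] := pselect (exists y, A y /\ R y a); first exact: IH Rya Ay.
by exists a => // y Ay Rya; apply: H; exists y.
Qed.

Lemma woc (w0 : W) (v0 : V) (D : set W) (Z : set V) :
  injle D Z \/ exists2 w, D w & injle Z [set y | D y /\ R y w].
Proof.
pose Pg (G : set (W * V)) := [/\ forall p, G p -> D p.1 /\ Z p.2,
  forall w v v', G (w, v) -> G (w, v') -> v = v',
  forall w w' v, G (w, v) -> G (w', v) -> w = w' &
  forall w v y, G (w, v) -> D y -> R y w -> exists v', G (y, v')].
have chain : forall F : set (set (W * V)), F `<=` Pg -> total_on F subset ->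
    Pg (\bigcup_(X in F) X).
  move=> F FP Ftot; split.
  - by move=> p [X FX Xp]; have [+ _ _ _] := FP _ FX; apply.
  - move=> w v v' [X FX Xp] [Y FY Yp].
    have [XY|YX] := Ftot _ _ FX FY.
      by have [_ H _ _] := FP _ FY; apply: (H w) => //; apply: XY.
    by have [_ H _ _] := FP _ FX; apply: (H w) => //; apply: YX.
  - move=> w w' v [X FX Xp] [Y FY Yp].
    have [XY|YX] := Ftot _ _ FX FY.
      by have [_ _ H _] := FP _ FY; apply: (H _ _ v) => //; apply: XY.
    by have [_ _ H _] := FP _ FX; apply: (H _ _ v) => //; apply: YX.
  - move=> w v y [X FX Xp] Dy Ryw.
    have [_ _ _ /(_ _ _ _ Xp Dy Ryw) [v' Xv']] := FP _ FX.
    by exists v'; exists X.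
have [G [[GDZ Gfun Ginj Gdown] Gmax]] := Zorn_bigcup chain.
have [Ddom|] := pselect (forall w, D w -> exists v, G (w, v)).
  left; pose f w := if pselect (exists v, G (w, v)) is left H then proj1_sig (cid H) else v0.
  have fG w : D w -> G (w, f w).
    move=> Dw; rewrite /f; case: pselect => [H|H]; last by case: H; apply: Ddom.
    exact: (proj2_sig (cid H)).
  exists f; split; first by move=> x /fG /GDZ [].
  by move=> x y Dx Dy fxy; apply: (Ginj _ _ (f x)) (fG _ Dx) _; rewrite fxy; apply: fG.
move=> /existsNP [w1 /not_implyP [Dw1 nw1]].
have [w [Dw ndw] wleast] := @wf_least [set w | D w /\ ~ exists v, G (w, v)] (ex_intro _ w1 (conj Dw1 nw1)).
have [Zran|] := pselect (forall v, Z v -> exists w, G (w, v)).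
  right; exists w => //.
  pose g v := if pselect (exists w, G (w, v)) is left H then proj1_sig (cid H) else w0.
  have gG v : Z v -> G (g v, v).
    move=> Zv; rewrite /g; case: pselect => [H|H]; last by case: H; apply: Zran.
    exact: (proj2_sig (cid H)).
  exists g; split.
    move=> v /gG Gv; split; first by have [] := GDZ _ Gv.
    have [//|ew|Rwy] := totR (g v) w.
      by case: ndw; exists v; rewrite -ew.
    have [Dgv _] := GDZ _ Gv.
    by case: ndw; have := Gdown _ _ _ Gv Dw Rwy.
  by move=> x y Zx Zy gxy; apply: (Gfun (g x)); [apply: gG | rewrite gxy; apply: gG].
move=> /existsNP [z /not_implyP [Zz nz]].
pose G' := G `|` [set (w, z)].
have PG' : Pg G'.
  split.
  - by move=> p [/GDZ //|->].
  - move=> x v v' [Gv|e1] [Gv'|e2].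
    + exact: Gfun Gv Gv'.
    + by case: e2 => ex _; case: ndw; exists v; rewrite -ex.
    + by case: e1 => ex _; case: ndw; exists v'; rewrite -ex.
    + by case: e1 => _ ->; case: e2 => _ ->.
  - move=> x x' v [Gv|e1] [Gv'|e2].
    + exact: Ginj Gv Gv'.
    + by case: e2 => _ ex; case: nz; exists x; rewrite -ex.
    + by case: e1 => _ ex; case: nz; exists x'; rewrite -ex.
    + by case: e1 => -> _; case: e2 => -> _.
  - move=> x v y [Gv|e1] Dy Ryx; last (case: e1 => ex _; subst x).
      by have [v' ?] := Gdown _ _ _ Gv Dy Ryx; exists v'; left.
    have [[v' Gv']|nd] := pselect (exists v', G (y, v')); first by exists v'; left.
    by case: (wleast y).
exfalso; apply: (Gmax G') => //; split; first exact: subsetUl.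
by move=> G'G; case: ndw; exists z; apply: G'G; right.
Qed.
End WOC.
Lemma injle_refl T (A : set T) : injle A A.
Proof. by exists id. Qed.

Lemma injle_trans T U V (A : set T) (B : set U) (C : set V) :
  injle A B -> injle B C -> injle A C.
Proof.
move=> [f [fAB fi]] [g [gBC gi]]; exists (g \o f); split=> [x Ax|x y Ax Ay /= e].
  exact/gBC/fAB.
by apply: fi => //; apply: gi => //; apply: fAB.
Qed.

Lemma injle_sub T (A B : set T) : A `<=` B -> injle A B.
Proof. by move=> AB; exists id; split=> // x /AB. Qed.

Lemma injle_X T T' U U' (A : set T) (A' : set T') (B : set U) (B' : set U') :
  injle A A' -> injle B B' -> injle (A `*` B) (A' `*` B').
Proof.
move=> [f [fA fi]] [g [gB gi]]; exists (fun p => (f p.1, g p.2)); split.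
  by move=> [x y] [/= Ax By]; split; [apply: fA|apply: gB].
move=> [x y] [x' y'] [/= Ax By] [/= Ax' By'] [] /(fi _ _ Ax Ax') -> /(gi _ _ By By') ->.
by [].
Qed.

Lemma injle_card T U (A : set T) (B : set U) : injle A B -> A #<= B.
Proof.
move=> [f [fAB finj]].
have [g] : $|{injfun A >-> B}|.
  apply/injfunPex; exists f; first by move=> x /fAB.
  by move=> x y /set_mem Ax /set_mem Ay; apply: finj.
exact: inj_card_le g.
Qed.

Lemma card_injle T U (u0 : U) (A : set T) (B : set U) : A #<= B -> injle A B.
Proof.
elim/Ppointed: U => U in B u0 *; first by case: (no u0).
move=> /pcard_leP /injfunPex [f fAB finj]; exists f; split.
  by move=> x Ax; apply: fAB.
by move=> x y Ax Ay; apply: finj; rewrite inE.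
Qed.

Lemma injle_eq T U (A : set T) (B : set U) : injle A B -> injle B A -> A #= B.
Proof. by move=> /injle_card AB /injle_card BA; apply: Cantor_Bernstein. Qed.

Lemma injle_fin T U (A : set T) (B : set U) : injle A B -> finite_set B -> finite_set A.
Proof. by move=> /injle_card; apply: card_le_finite. Qed.

Lemma injle_nat T (A : set T) (x : T) : infinite_set A -> injle [set: nat] A.
Proof. by move=> /infiniteP H; apply: (card_injle x H). Qed.

Lemma shift_inj T (A : set T) (e : nat -> T) k : (forall n, A (e n)) -> injective e ->
  injle A (A `\` [set e k]).
Proof.
move=> Ae ei.
pose h y := if pselect (exists2 n, y = e n & (k <= n)%N) is left H then e (s2val (cid2 H)).+1 else y.
have hE y n : y = e n -> (k <= n)%N -> h y = e n.+1.
  move=> yE kn; rewrite /h; case: pselect => [H|[]]; last by exists n.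
  by case: (cid2 H) => m /= ym _; rewrite yE in ym; rewrite (ei _ _ ym).
have hN y : ~ (exists2 n, y = e n & (k <= n)%N) -> h y = y.
  by move=> H; rewrite /h; case: pselect.
exists h; split.
  move=> y Ay; have [[n yn kn]|H] := pselect (exists2 n, y = e n & (k <= n)%N).
    rewrite (hE _ _ yn kn); split => // /ei/eqP; rewrite eqn_leq => /andP[+ _].
    by rewrite ltnNge kn.
  rewrite hN //; split => // yk; apply: H; exists k => //.
move=> y y' Ay Ay'.
have [[n yn kn]|H] := pselect (exists2 n, y = e n & (k <= n)%N);
have [[n' yn' kn']|H'] := pselect (exists2 n, y' = e n & (k <= n)%N).
- by rewrite (hE _ _ yn kn) (hE _ _ yn' kn') => /ei [] nn'; rewrite yn yn' nn'.
- rewrite (hE _ _ yn kn) hN // => ey'; case: H'; exists n.+1 => //.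
  exact: leqW.
- rewrite hN // (hE _ _ yn' kn') => ey; case: H; exists n'.+1 => //.
  exact: leqW.
- by rewrite !hN.
Qed.

Lemma drop T (A : set T) x : infinite_set A -> A x -> injle A (A `\` [set x]).
Proof.
move=> Ainf Ax; have [f [fA fi]] := injle_nat x Ainf.
have {}fi : injective f by move=> a b; apply: fi.
have {}fA n : A (f n) by apply: fA.
have [[k fk]|nr] := pselect (exists k, f k = x).
  by rewrite -fk; apply: shift_inj.
pose e n := if n is m.+1 then f m else x.
have -> : x = e 0 by [].
apply: shift_inj 0 _ _; first by case.
move=> [|a] [|b] //= => [xf|fx|/fi -> //]; case: nr; [exists b|exists a] => //.
Qed.

Lemma sing_unit T (S : set T) x : S = [set x] -> S #= [set: unit].
Proof.
move=> ->; apply: injle_eq.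
  by exists (fun _ => tt); split => // a b -> ->.
by exists (fun _ => x); split => // [] [] [].
Qed.

Lemma eq_injle T U (u0 : U) (A : set T) (B : set U) : A #= B -> injle A B.
Proof. by move=> /card_eqPle [AB _]; exact: (card_injle u0 AB). Qed.

Lemma img_le T U (x0 : T) (f : T -> U) (A : set T) : injle (f @` A) A.
Proof.
pose g y := if pselect (exists2 x, A x & f x = y) is left H then s2val (cid2 H) else x0.
have gP y : (f @` A) y -> A (g y) /\ f (g y) = y.
  move=> [x Ax fx]; rewrite /g; case: pselect => [H|[]]; last by exists x.
  by case: (cid2 H).
exists g; split; first by move=> y /gP [].
by move=> y y' /gP [_ e] /gP [_ e'] E; rewrite -e -e' E.
Qed.

Lemma bigcup_fin_inj J T (j0 : J) (D : set J) (B : J -> set T) :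
  (forall j, D j -> finite_set (B j)) ->
  (forall i j t, D i -> D j -> B i t -> B j t -> i = j) ->
  injle (\bigcup_(j in D) B j) (D `*` [set: nat]).
Proof.
move=> Bfin Bdisj.
have /choice [phi phiP] : forall j, exists f : T -> nat, D j -> forall t t', B j t -> B j t' -> f t = f t' -> t = t'.
  move=> j; have [Dj|nDj] := pselect (D j); last by exists (fun _ => 0%N).
  have [n Bn] := Bfin _ Dj; have [f [_ fi]] := eq_injle 0%N Bn.
  by exists f => _; apply: fi.
have /choice [jt jtP] : forall t, exists j, (\bigcup_(j in D) B j) t -> D j /\ B j t.
  move=> t; have [[j Dj Bjt]|nt] := pselect ((\bigcup_(j in D) B j) t).
    by exists j.
  by exists j0.
exists (fun t => (jt t, phi (jt t) t)); split.
  by move=> t /jtP [Dj _].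
move=> t t' /jtP [Dj Bt] /jtP [Dj' Bt'] [e e2].
rewrite -e in Bt' e2; exact: (phiP _ Dj _ _ Bt Bt' e2).
Qed.

Section K.
Variables (K : Type) (lt : K -> K -> Prop).
Hypothesis ltirr : forall a, ~ lt a a.
Hypothesis lttr : forall a b c, lt a b -> lt b c -> lt a c.
Hypothesis lttot : forall a b, [\/ lt a b, a = b | lt b a].
Hypothesis ltwf : well_founded lt.
Definition seg a := [set b | lt b a].
Hypothesis ltinit : forall a, ~ injle [set: K] (seg a).
Hypothesis Kinf : infinite_set [set: K].
Variable k0 : K.

Definition le a b := lt a b \/ a = b.
Lemma lt_le_trans a b c : lt a b -> le b c -> lt a c.
Proof. by move=> ab [bc|<-] //; apply: lttr bc. Qed.
Lemma le_lt_trans a b c : le a b -> lt b c -> lt a c.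
Proof. by move=> [ab|->] bc //; apply: lttr bc. Qed.
Lemma le_trans a b c : le a b -> le b c -> le a c.
Proof. by move=> [ab|->] // bc; left; apply: lt_le_trans bc. Qed.
Lemma le_refl a : le a a. Proof. by right. Qed.
Lemma not_lt_le a b : ~ lt a b -> le b a.
Proof. by case: (lttot a b) => [//|->|]; [right|left]. Qed.

Lemma NM x : exists y, lt x y.
Proof.
have [//|H] := pselect (exists y, lt x y); case: (@ltinit x).
apply: injle_trans (drop Kinf (I : [set: K] x)) _; apply: injle_sub.
move=> y [_ /= yx]; case: (lttot y x) => [//|e|xy]; [by case: yx | by case: H; exists y].
Qed.

Definition mx a b := if pselect (lt a b) then b else a.
Lemma le_mxl a b : le a (mx a b).
Proof. by rewrite /mx; destruct (pselect (lt a b)) as [ab|nab]; [left|right]. Qed.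
Lemma le_mxr a b : le b (mx a b).
Proof. by rewrite /mx; destruct (pselect (lt a b)) as [ab|nab]; [right|apply: not_lt_le]. Qed.
Lemma mx_cases a b : mx a b = a \/ mx a b = b.
Proof. by rewrite /mx; destruct (pselect (lt a b)); [right|left]. Qed.

Lemma FB (A : set K) : finite_set A -> exists b, forall x, A x -> lt x b.
Proof.
move=> [n]; elim: n A => [|n IH] A.
  move=> /card_eqPle [AI _]; have [f [fA _]] := card_injle 0%N AI.
  by exists k0 => x /fA.
move=> /eq_cardSP [x Ax /IH [b' Hb']]; have [y xy] := NM x.
exists (mx b' y) => z Az; have [->|zx] := pselect (z = x).
  exact: lt_le_trans xy (le_mxr _ _).
exact: lt_le_trans (Hb' _ (conj Az zx)) (le_mxl _ _).
Qed.

Definition bnd {V} (Z : set V) := exists a, injle Z (seg a).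

Lemma bnd_small V (Z : set V) : bnd Z -> ~ injle [set: K] Z.
Proof. by move=> [a Za] KZ; apply: (@ltinit a); apply: injle_trans Za. Qed.

Lemma small_bnd V (Z : set V) : ~ injle [set: K] Z -> bnd Z.
Proof.
move=> nKZ; have [[v0 Zv0]|Z0] := pselect (exists v, Z v); last first.
  by exists k0, (fun _ => k0); split=> [x Zx|x y Zx]; case: Z0; exists x.
have [//|[w _ Hw]] := woc ltwf lttot k0 v0 [set: K] Z.
by exists w; apply: injle_trans Hw (injle_sub _) => y [].
Qed.

Lemma bnd_le U V (A : set U) (B : set V) : injle A B -> bnd B -> bnd A.
Proof. by move=> AB [a Ba]; exists a; apply: injle_trans Ba. Qed.

Lemma fin_bnd V (Z : set V) : finite_set Z -> bnd Z.
Proof. by move=> Zf; apply: small_bnd => /injle_fin /(_ Zf). Qed.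

Lemma seg_bnd a : bnd (seg a).
Proof. by exists a; apply: injle_refl. Qed.

Lemma seg_sub a b : le a b -> seg a `<=` seg b.
Proof. by move=> ab x xa; apply: lt_le_trans ab. Qed.

(* Hessenberg *)
Definition R2 (p q : K * K) := lt (mx p.1 p.2) (mx q.1 q.2) \/
  (mx p.1 p.2 = mx q.1 q.2 /\ (lt p.1 q.1 \/ (p.1 = q.1 /\ lt p.2 q.2))).

Lemma R2wf : well_founded R2.
Proof.
suff H m a b : mx a b = m -> Acc R2 (a, b) by move=> [a b]; exact: H erefl.
elim/(well_founded_ind ltwf): m a b => m IHm a.
elim/(well_founded_ind ltwf): a => a IHa b.
elim/(well_founded_ind ltwf): b => b IHb Em.
constructor => -[a' b']; rewrite /R2 /= => -[H|[E [H|[Ea Hb]]]].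
- by apply: (IHm (mx a' b')) => //; rewrite -Em.
- by apply: (IHa a') => //; rewrite E.
- by rewrite Ea; apply: IHb => //; rewrite -Ea E.
Qed.

Lemma R2tot p q : [\/ R2 p q, p = q | R2 q p].
Proof.
case: p q => [a b] [a' b']; rewrite /R2 /=.
case: (lttot (mx a b) (mx a' b')) => [H|E|H].
- by apply: Or31; left.
- case: (lttot a a') => [H|Ea|H].
  + by apply: Or31; right; split => //; left.
  + case: (lttot b b') => [H|Eb|H].
    * by apply: Or31; right; split => //; right.
    * by apply: Or32; rewrite Ea Eb.
    * by apply: Or33; right; split => //; right.
  + by apply: Or33; right; split => //; left.
- by apply: Or33; left.
Qed.


Lemma hess b : infinite_set (seg b) -> injle (seg b `*` seg b) (seg b).
Proof.
elim/(well_founded_ind ltwf): b => b IH binf.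
have [r Pr rleast] := @wf_least _ _ ltwf [set a | injle (seg b) (seg a)]
   (ex_intro _ b (injle_refl _)).
have rb : injle (seg r) (seg b).
  have [//|[w rw Hw]] := woc ltwf lttot k0 k0 (seg r) (seg b).
  by case: (rleast w) => //; apply: injle_trans Hw (injle_sub _) => y [].
case: (lttot r b) => [rltb|Erb|bltr]; last by exfalso; apply: (rleast b (injle_refl _)).
  have rinf : infinite_set (seg r) by move=> /(injle_fin Pr).
  apply: injle_trans (injle_X Pr Pr) _; apply: injle_trans rb.
  exact: IH.
subst r.
have [//|[w [/= w1 w2] Hw]] := woc R2wf R2tot (k0, k0) k0 (seg b `*` seg b) (seg b).
exfalso; set g := mx w.1 w.2.
have gb : lt g b by rewrite /g; case: (mx_cases w.1 w.2) => ->.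
pose cs := [set x | le x g].
have sub : [set y | (seg b `*` seg b) y /\ R2 y w] `<=` cs `*` cs.
  move=> [y1 y2] [_ /= Hy]; have Hm : le (mx y1 y2) g.
    by case: Hy => [H|[E _]]; [left|right].
  by split; [apply: le_trans (le_mxl _ _) Hm|apply: le_trans (le_mxr _ _) Hm].
have Hb := injle_trans Hw (injle_sub sub).
have [csf|csinf] := pselect (finite_set cs).
  by apply: binf; apply: injle_fin Hb _; apply: finite_setX.
have csg : injle cs (seg g).
  apply: injle_trans (drop csinf (le_refl g)) (injle_sub _).
  by move=> x [[//|->] /= ]; case.
have ginf : infinite_set (seg g) by move=> /(injle_fin csg).
apply: (rleast g) => //=.
apply: injle_trans Hb _; apply: injle_trans (injle_X csg csg) _.
exact: IH.
Qed.

Lemma bnd_X U V (A : set U) (B : set V) : bnd A -> bnd B -> bnd (A `*` B).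
Proof.
move=> [a Ha] [b Hb]; set m := mx a b.
have Ha' := injle_trans Ha (injle_sub (seg_sub (le_mxl a b))).
have Hb' := injle_trans Hb (injle_sub (seg_sub (le_mxr a b))).
have H := injle_X Ha' Hb'.
have [mf|minf] := pselect (finite_set (seg m)).
  by apply: bnd_le H (fin_bnd _); apply: finite_setX.
by exists m; apply: injle_trans H (hess minf).
Qed.

Lemma bnd_U V (A B : set V) : bnd A -> bnd B -> bnd (A `|` B).
Proof.
move=> [a [fa [faA fai]]] [b [fb [fbB fbi]]].
have [k1 k01] := NM k0.
have [m' Hm'] := NM (mx (mx a b) k1).
have am : le a m' by left; apply: le_lt_trans Hm'; apply: le_trans (le_mxl _ _) (le_mxl _ _).
have bm : le b m' by left; apply: le_lt_trans Hm'; apply: le_trans (le_mxr _ _) (le_mxl _ _).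
have k1m : lt k1 m' by apply: le_lt_trans Hm'; apply: le_mxr.
have k0m : lt k0 m' by apply: lttr k01 k1m.
apply: bnd_le (bnd_X (seg_bnd m') (seg_bnd m')).
exists (fun v => if pselect (A v) then (fa v, k0) else (fb v, k1)); split.
  move=> v ABv; case: (pselect (A v)) => [Av|nAv]; split => //=.
    exact: seg_sub am _ (faA _ Av).
  by case: ABv => // Bv; exact: seg_sub bm _ (fbB _ Bv).
move=> v v' ABv ABv'; case: (pselect (A v)) => [Av|nAv]; case: (pselect (A v')) => [Av'|nAv'].
- by case=> /fai; apply.
- by case=> _ e; rewrite e in k01; case: (ltirr k01).
- by case=> _ e; rewrite e in k01; case: (ltirr k01).
- case: ABv => // Bv; case: ABv' => // Bv'.
  by case=> /fbi; apply.
Qed.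

Lemma rho V (v0 : V) (Z : set V) : bnd Z ->
  exists r, [/\ injle Z (seg r), injle (seg r) Z & forall a, injle Z (seg a) -> ~ lt a r].
Proof.
move=> [a Za]; have [r Pr rleast] := @wf_least _ _ ltwf [set a | injle Z (seg a)] (ex_intro _ a Za).
exists r; split => //.
have [//|[w rw Hw]] := woc ltwf lttot k0 v0 (seg r) Z.
by case: (rleast w) => //; apply: injle_trans Hw (injle_sub _) => y [].
Qed.

Lemma ZN V (Z : set V) : bnd Z -> infinite_set Z -> injle (Z `*` [set: nat]) Z.
Proof.
move=> Zb Zinf; have [v0 _] := infinite_setN0 Zinf.
have [r [Zr rZ _]] := rho v0 Zb.
have rinf : infinite_set (seg r) by move=> /(injle_fin Zr).
have Nr := injle_nat k0 rinf.
apply: injle_trans (injle_X Zr Nr) _; apply: injle_trans (hess rinf) rZ.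
Qed.

Lemma cardD1 T (A : set T) n y : A #= `I_n.+1 -> A y -> A `\ y #= `I_n.
Proof.
move=> /eq_cardSP [x Ax Hx] Ay.
have [->//|yx] := pselect (y = x).
apply: card_eq_trans Hx; apply: injle_eq.
  exists (fun z => if pselect (z = x) then y else z); split.
    move=> z [Az /= zy]; destruct (pselect (z = x)) as [zx|zx]; split => //=.
  move=> z z' [Az zy] [Az' zy'] /=.
  destruct (pselect (z = x)) as [zx|zx]; destruct (pselect (z' = x)) as [z'x|z'x] => //=;
  first [ by rewrite zx z'x | by move=> e; case: zy'; rewrite -e | by move=> e; case: zy; rewrite e | idtac].
exists (fun z => if pselect (z = y) then x else z); split.
  move=> z [Az /= zx]; destruct (pselect (z = y)) as [zy|zy]; split => //=; try by move=> e; apply: yx; rewrite -e.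
move=> z z' [Az zx] [Az' zx'] /=.
destruct (pselect (z = y)) as [zy|zy]; destruct (pselect (z' = y)) as [z'y|z'y] => //=;
first [ by rewrite zy z'y | by move=> e; case: zx'; rewrite -e | by move=> e; case: zx; rewrite e | idtac].
Qed.

Lemma I0_empty T (A : set T) x : A #= `I_0 -> ~ A x.
Proof. by move=> /card_eqPle [AI _]; have [f [fA _]] := card_injle 0%N AI => /fA. Qed.

Lemma PF r : infinite_set (seg r) ->
  injle [set A : set K | A `<=` seg r /\ finite_set A] (seg r).
Proof.
move=> rinf.
have [p [pin pinj]] := hess rinf.
have [e [ein einj]] := injle_nat k0 rinf.
have [z0 z0r] := infinite_setN0 rinf.
pose pick (A : set K) := if pselect (exists x, A x) is left H then proj1_sig (cid H) else k0.
have pickA A x : A x -> A (pick A).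
  move=> Ax; rewrite /pick; case: pselect => [H|[]]; last by exists x.
  exact: (proj2_sig (cid H)).
pose code := fix code n (A : set K) := if n is m.+1 then p (pick A, code m (A `\ pick A)) else z0.
have codeIn n : forall A, A `<=` seg r -> A #= `I_n -> seg r (code n A).
  elim: n => [|n IH] A Ar /= An; first exact: z0r.
  have [x Ax _] := eq_cardSP _ _ An.
  apply: (pin (pick A, code n (A `\ pick A))); split => /=; first exact/Ar/(pickA _ x).
  by apply: IH; [move=> y [/Ar]|apply: cardD1 (pickA _ x _)].
have codeInj n : forall A B, A `<=` seg r -> A #= `I_n -> B `<=` seg r -> B #= `I_n ->
    code n A = code n B -> A = B.
  elim: n => [|n IH] A B Ar An Br Bn /=.
    by move=> _; apply/seteqP; split => x; [move/(I0_empty An)|move/(I0_empty Bn)].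
  have [x Ax _] := eq_cardSP _ _ An; have [y By _] := eq_cardSP _ _ Bn.
  have pA := pickA _ _ Ax; have pB := pickA _ _ By.
  have An' := cardD1 An pA; have Bn' := cardD1 Bn pB.
  have Ar' : A `\ pick A `<=` seg r by move=> z [/Ar].
  have Br' : B `\ pick B `<=` seg r by move=> z [/Br].
  move=> E.
  have HA : (seg r `*` seg r) (pick A, code n (A `\ pick A)).
    by split; [exact: Ar|exact: codeIn].
  have HB : (seg r `*` seg r) (pick B, code n (B `\ pick B)).
    by split; [exact: Br|exact: codeIn].
  case: (pinj _ _ HA HB E) => epk ecode.
  have eAB := IH _ _ Ar' An' Br' Bn' ecode; rewrite epk in eAB.
  apply/seteqP; split => z.
    move=> Az; have [->//|zp] := pselect (z = pick B).
    have : (B `\ pick B) z by rewrite -eAB; split.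
    by case.
  move=> Bz; have [->|zp] := pselect (z = pick B); first by rewrite -epk.
  have : (A `\ pick B) z by rewrite eAB; split.
  by case.
pose nA (A : set K) := if pselect (finite_set A) is left H then proj1_sig (cid H) else 0%N.
have nAE A : finite_set A -> A #= `I_(nA A).
  by move=> Af; rewrite /nA; case: pselect => // H; exact: (proj2_sig (cid H)).
exists (fun A => p (e (nA A), code (nA A) A)); split.
  move=> A [Ar Af]; apply: (pin (e (nA A), code (nA A) A)); split => /=.
    exact: ein.
  exact: codeIn (nAE _ Af).
move=> A B [Ar Af] [Br Bf] E.
have HA : (seg r `*` seg r) (e (nA A), code (nA A) A).
  by split; [exact: ein|exact: codeIn (nAE _ Af)].
have HB : (seg r `*` seg r) (e (nA B), code (nA B) B).
  by split; [exact: ein|exact: codeIn (nAE _ Bf)].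
case: (pinj _ _ HA HB E) => /einj en; rewrite en // => E'.
apply: (codeInj (nA B)) => //; last exact: nAE.
by have := nAE _ Af; rewrite en.
Qed.

Lemma PFT T (U : set T) r : injle U (seg r) ->
  injle [set A : set T | A `<=` U /\ finite_set A] [set A : set K | A `<=` seg r /\ finite_set A].
Proof.
move=> [f [fU fi]]; exists (fun A => f @` A); split.
  move=> A [AU Af]; split; last exact: finite_image.
  by move=> _ [x Ax <-]; apply/fU/AU.
move=> A B [AU _] [BU _] E; apply/seteqP; split => x Ax.
  have : (f @` B) (f x) by rewrite -E; exists x.
  by case=> y By /fi <- //; [apply: BU | apply: AU].
have : (f @` A) (f x) by rewrite E; exists x.
by case=> y Ay /fi <- //; [apply: AU | apply: BU].
Qed.

Definition cof (C : set K) := forall a, exists2 c, C c & (lt a c \/ a = c).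

Lemma cof_inf C : cof C -> infinite_set C.
Proof.
move=> Cc /FB [b Hb]; have [c Cc' bc] := Cc b.
have := Hb _ Cc'; case: bc => [bc cb|->]; last exact: ltirr.
by apply: (@ltirr b); apply: lttr bc cb.
Qed.

Lemma nle_lt a b : ~ (lt a b \/ a = b) -> lt b a.
Proof. by move=> H; case: (lttot a b) => // [ab|ab]; case: H; [left|right]. Qed.

Lemma cof_exists : exists C, [/\ cof C, (forall C', cof C' -> injle C C') &
  exists I : set K, [/\ injle I C, injle C I, (forall i j, I i -> lt j i -> I j) &
     (forall i, I i -> ~ injle C (seg i))]].
Proof.
have [[m0 Hm0]|nb] := pselect (exists m, exists C, cof C /\ injle C (seg m)); last first.
  exists [set: K]; split.
  - by move=> a; exists a => //; right.
  - move=> C' C'c; have [//|] := pselect (injle [set: K] C').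
    by move=> /small_bnd [m Hm]; case: nb; exists m, C'.
  - exists [set: K]; split; [exact: injle_refl|exact: injle_refl|by []|].
    by move=> i _; apply: ltinit.
have [m [C [Cc Cm]] mleast] := @wf_least _ _ ltwf [set m | exists C, cof C /\ injle C (seg m)]
   (ex_intro _ m0 Hm0).
have minC C' : cof C' -> injle (seg m) C'.
  move=> C'c; have [c _ _] := C'c k0.
  have [//|[w mw Hw]] := woc ltwf lttot k0 c (seg m) C'.
  exfalso; apply: (mleast w) => //; exists C'; split => //.
  by apply: injle_trans Hw (injle_sub _) => y [].
exists C; split => //.
- by move=> C' /minC; apply: injle_trans Cm.
- exists (seg m); split => //.
  + exact: minC.
  + by move=> i j /= im ji; apply: lttr ji im.
  + by move=> i im Ci; apply: (mleast i) => //; exists C.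
Qed.
Lemma mainK T (F : K -> set T) : (forall xi, finite_set (F xi) /\ F xi !=set0) ->
  exists X : set T,
    [/\ kappa_many_singletons F X,
        (X #= [set: unit] \/ card_is_cf lt X \/ X #= [set: K]),
        (forall X' : set T, X' `<=` X -> X' #= X -> kappa_many_singletons F X') &
        (forall x, X x -> exists xi : K, F xi `&` X = [set x])].
Proof.
move=> Fh.
have [t0 _] := (Fh k0).2.
have km_of X : injle [set: K] [set xi | exists x, F xi `&` X = [set x]] ->
    kappa_many_singletons F X.
  move=> H; rewrite /kappa_many_singletons; apply: injle_eq; first exact: injle_sub.
  by apply: injle_trans H (injle_sub _) => xi [x E]; apply: sing_unit E.
have [[x Dx]|nD] := pselect (exists x, injle [set: K] [set xi | F xi x]).
  exists [set x].
  have K1 X' : X' `<=` [set x] -> X' #= [set x] -> kappa_many_singletons F X'.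
    move=> sub /card_eqPle [_ le].
    have [f [fA _]] := card_injle t0 le.
    have X'x : X' x by have := fA x erefl; move=> /[dup] /sub ->.
    have -> : X' = [set x] by apply/seteqP; split => // y ->.
    apply: km_of; apply: injle_trans Dx (injle_sub _) => xi Fx; exists x.
    by apply/seteqP; split => y; [case=> _ -> | move=> ->; split].
  split.
  - exact: K1.
  - by left; apply: sing_unit.
  - exact: K1.
  - move=> y ->; have [f [fA _]] := Dx; exists (f k0).
    by apply/seteqP; split => z; [case=> _ -> | move=> ->; split => //; apply: fA].
have Dbnd x : bnd [set xi | F xi x] by apply: small_bnd => H; apply: nD; exists x.
have [E [_ Etriv Emax]] := ex_maximal_disjoint_subcollection F [set: K].
have /choice [s sF] : forall xi, exists t, F xi t by move=> xi; apply: (Fh xi).2.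
have sE xi : E xi -> F xi `&` (s @` E) = [set s xi].
  move=> Exi; apply/seteqP; split => y.
    move=> [Fy [xi' Exi' e]]; rewrite -e; rewrite -e in Fy.
    by rewrite (Etriv xi xi') //; exists (s xi').
  by move=> ->; split => //; exists xi.
have sinj : {in E &, injective s}.
  move=> xi xi' /set_mem Exi /set_mem Exi' e; apply: Etriv => //.
  by exists (s xi); split => //; rewrite e.
have [KE|nKE] := pselect (injle [set: K] E).
  have EK : E #= [set: K] by apply: injle_eq => //; exact: injle_sub.
  have XK : s @` E #= [set: K] by apply: card_eq_trans (inj_card_eq sinj) EK.
  have K2 X' : X' `<=` s @` E -> X' #= s @` E -> kappa_many_singletons F X'.
    move=> sub eqX.
    pose E' := [set xi | E xi /\ X' (s xi)].
    have imE' : s @` E' = X'.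
      apply/seteqP; split => [_ [xi [_ ?] <-] //|y X'y].
      by have [xi Exi e] := sub _ X'y; exists xi => //; split => //; rewrite e.
    have sinj' : {in E' &, injective s}.
      by move=> a b /set_mem [Ea _] /set_mem [Eb _]; apply: sinj; rewrite inE.
    have E'K : E' #= [set: K].
      apply: card_eq_trans (card_esym (inj_card_eq sinj')) _.
      by rewrite imE'; apply: card_eq_trans eqX XK.
    apply: km_of; apply: injle_trans (eq_injle k0 (card_esym E'K)) (injle_sub _).
    move=> xi [Exi X's]; exists (s xi); apply/seteqP; split => y.
      by move=> [Fy X'y]; rewrite -(sE _ Exi); split => //; apply: sub.
    by move=> ->; split.
  exists (s @` E); split.
  - exact: K2.
  - by right; right.
  - exact: K2.
  - by move=> _ [xi Exi <-]; exists xi; apply: sE.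
have Ebnd : bnd E by apply: small_bnd.
pose U := \bigcup_(xi in E) F xi.
have meet eta : exists u, F eta u /\ U u.
  have [//|nm] := pselect (exists u, F eta u /\ U u); exfalso.
  have nE : ~ E eta.
    move=> Ee; have [u Fu] := (Fh eta).2; apply: nm; exists u; split => //; by exists eta.
  have EC : E `<` E `|` [set eta].
    split; first exact: subsetUl.
    by move=> sub; apply: nE; apply: sub; right.
  apply: (Emax _ EC) => //.
  move=> i j [Ei|->] [Ej|->] [t [Fi Fj]] //.
  - by apply: Etriv => //; exists t.
  - by case: nm; exists t; split => //; exists i.
  - by case: nm; exists t; split => //; exists j.
pose G eta := F eta `&` U.
have Gne eta : exists t, G eta t by have [u [Fu Uu]] := meet eta; exists u.
have Gfin eta : finite_set (G eta) by apply: finite_setIl; exact: (Fh eta).1.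
have Edisj : forall i j t, E i -> E j -> F i t -> F j t -> i = j.
  by move=> i j t Ei Ej Fi Fj; apply: Etriv => //; exists t.
have Ubnd : bnd U.
  have [Efin|Einf] := pselect (finite_set E).
    by apply: fin_bnd; apply: bigcup_finite => // xi _; exact: (Fh xi).1.
  apply: (bnd_le _ Ebnd).
  apply: injle_trans (bigcup_fin_inj k0 (fun xi _ => (Fh xi).1) Edisj) _.
  exact: ZN Ebnd Einf.
have [r [rinf Ur]] : exists r, infinite_set (seg r) /\ injle U (seg r).
  have [r0 Ur0] := Ubnd.
  have [[r1 r1inf]|allfin] := pselect (exists r1, infinite_set (seg r1)).
    exists (mx r0 r1); split.
      move=> fin; apply: r1inf; apply: sub_finite_set fin; apply: seg_sub; apply: le_mxr.
    exact: injle_trans Ur0 (injle_sub (seg_sub (le_mxl _ _))).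
  have segfin a : finite_set (seg a).
    by have [//|H] := pselect (finite_set (seg a)); case: allfin; exists a.
  exfalso; apply: Kinf.
  have -> : [set: K] = \bigcup_(x in U) [set xi | F xi x].
    by apply/seteqP; split => // xi _; have [u [Fu Uu]] := meet xi; exists u.
  apply: bigcup_finite; first exact: injle_fin Ur0 (segfin r0).
  by move=> x _; have [a Ha] := Dbnd x; exact: injle_fin Ha (segfin a).
pose V := [set A : set T | A `<=` U /\ finite_set A].
have Vr : injle V (seg r) by apply: injle_trans (PFT Ur) (PF rinf).
have Vbnd : bnd V by exists r.
have GV eta : V (G eta) by split; [move=> t [] | exact: Gfin].
have [C [Cc Cmin [I [IC CI Idown Ismall]]]] := cof_exists.
have Cinf := cof_inf Cc.
have [h [hC hinj]] := CI.
have /choice [cb cbP] : forall i, exists a, I i -> forall c, C c -> le (h c) i -> lt c a.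
  move=> i; have [Ii|nIi] := pselect (I i); last by exists k0.
  pose S := [set c | C c /\ le (h c) i].
  have [[a Ha]|nH] := pselect (exists a, forall c, S c -> ~ (lt a c \/ a = c)).
    by exists a => _ c Cc' hc; apply: nle_lt; apply: Ha.
  exfalso.
  have Sc : cof S.
    move=> a; have [//|nc] := pselect (exists2 c, S c & (lt a c \/ a = c)).
    by case: nH; exists a => c Sc' lac; apply: nc; exists c.
  have CS := Cmin _ Sc.
  have Sle : injle S [set j | I j /\ le j i].
    exists h; split; first by move=> c [Cc' hc]; split => //; exact: hC.
    by move=> c c' [Cc1 _] [Cc2 _]; exact: hinj.
  have [fin|inf] := pselect (finite_set [set j | I j /\ le j i]).
    by apply: Cinf; apply: injle_fin (injle_trans CS Sle) fin.
  apply: (Ismall i Ii); apply: injle_trans CS (injle_trans Sle _).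
  apply: injle_trans (drop inf (conj Ii (le_refl i))) (injle_sub _).
  by move=> j [[Ij [ji|->]] /= nji] //.
pose fib (A : set T) := [set eta | G eta = A].
pose PG (Gm : set (K * set T)) := [/\
  forall i A, Gm (i, A) -> [/\ I i, (exists eta, G eta = A) & injle (seg (cb i)) (fib A)],
  forall i A B, Gm (i, A) -> Gm (i, B) -> A = B,
  forall i j A B t, Gm (i, A) -> Gm (j, B) -> A t -> B t -> i = j &
  forall i A j, Gm (i, A) -> I j -> lt j i -> exists B, Gm (j, B)].
have chain : forall Fm : set (set (K * set T)), Fm `<=` PG -> total_on Fm subset ->
    PG (\bigcup_(X in Fm) X).
  move=> Fm FP Ftot; split.
  - by move=> i A [X FX XA]; have [H _ _ _] := FP _ FX; apply: H.
  - move=> i A B [X FX XA] [Y FY YB].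
    have [XY|YX] := Ftot _ _ FX FY.
      by have [_ H _ _] := FP _ FY; apply: (H i) => //; apply: XY.
    by have [_ H _ _] := FP _ FX; apply: (H i) => //; apply: YX.
  - move=> i j A B t [X FX XA] [Y FY YB] At Bt.
    have [XY|YX] := Ftot _ _ FX FY.
      by have [_ _ H _] := FP _ FY; apply: (H _ _ A B t) => //; apply: XY.
    by have [_ _ H _] := FP _ FX; apply: (H _ _ A B t) => //; apply: YX.
  - move=> i A j [X FX XA] Ij ji.
    have [_ _ _ /(_ _ _ _ XA Ij ji) [B XB]] := FP _ FX.
    by exists B; exists X.
have [Gm [[Gma Gmf Gmd Gmdown] Gmax]] := Zorn_bigcup chain.
have domI : forall i, I i -> exists A, Gm (i, A).
  have [//|/existsNP [i1 /not_implyP [Ii1 ni1]]] :=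
    pselect (forall i, I i -> exists A, Gm (i, A)).
  exfalso.
  have [i [Ii ndi] ileast] := @wf_least _ _ ltwf [set i | I i /\ ~ exists A, Gm (i, A)]
    (ex_intro _ i1 (conj Ii1 ni1)).
  have domlt j A : Gm (j, A) -> lt j i.
    move=> GjA; case: (lttot j i) => [//|eji|ij].
      by case: ndi; exists A; rewrite -eji.
    by have [B GB] := Gmdown _ _ _ GjA Ii ij; case: ndi; exists B.
  pose dom := [set j | exists A, Gm (j, A)].
  have /choice [Aof AofP] : forall j, exists A, dom j -> Gm (j, A).
    move=> j; have [[A GA]|nd] := pselect (dom j); first by exists A.
    by exists set0.
  pose W := \bigcup_(j in dom) Aof j.
  have Aoffin j : dom j -> finite_set (Aof j).
    move=> dj; have [_ [eta <-] _] := Gma _ _ (AofP _ dj); exact: Gfin.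
  have Wdisj : forall a b t, dom a -> dom b -> Aof a t -> Aof b t -> a = b.
    by move=> a b t da db; apply: Gmd; apply: AofP.
  have WN := bigcup_fin_inj k0 Aoffin Wdisj.
  have domsub : dom `<=` seg i by move=> j [A GA]; apply: domlt GA.
  have [Wbnd WC] : bnd W /\ ~ injle C W.
    have [dfin|dinf] := pselect (finite_set dom).
      have Wfin : finite_set W by apply: bigcup_finite.
      split; first exact: fin_bnd.
      by move=> CW; apply: Cinf; apply: injle_fin CW Wfin.
    have dbnd : bnd dom by exists i; apply: injle_sub.
    have Wd := injle_trans WN (ZN dbnd dinf).
    split; first exact: bnd_le Wd dbnd.
    move=> CW; apply: (Ismall i Ii).
    exact: injle_trans CW (injle_trans Wd (injle_sub domsub)).
  have /choice [aw awP] : forall t, exists a, injle [set xi | F xi t] (seg a).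
    by move=> t; apply: Dbnd.
  have [b Hb] : exists b, forall t, W t -> lt (aw t) b.
    have [[b Hb]|nH] := pselect (exists b, forall a, (aw @` W) a -> ~ (lt b a \/ b = a)).
      by exists b => t Wt; apply: nle_lt; apply: Hb; exists t.
    exfalso; apply: WC.
    have Bc : cof (aw @` W).
      move=> a; have [//|nc] := pselect (exists2 c, (aw @` W) c & (lt a c \/ a = c)).
      by case: nH; exists a => c Sc' lac; apply: nc; exists c.
    exact: injle_trans (Cmin _ Bc) (img_le t0 _ _).
  pose excl := [set eta | exists t, G eta t /\ W t].
  have /choice [iota iotaP] : forall t, exists f : K -> K,
      (forall xi, F xi t -> seg (aw t) (f xi)) /\
      (forall xi xi', F xi t -> F xi' t -> f xi = f xi' -> xi = xi').
    by move=> t; have [f [f1 f2]] := awP t; exists f; split.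
  have /choice [te teP] : forall eta, exists t, excl eta -> G eta t /\ W t.
    move=> eta; have [[t Ht]|ne] := pselect (excl eta); first by exists t.
    by exists t0.
  have exclb : bnd excl.
    apply: (bnd_le _ (bnd_X Wbnd (seg_bnd b))).
    exists (fun eta => (te eta, iota (te eta) eta)); split.
      move=> eta /teP [[Ft _] Wt]; split => //=.
      apply: lttr (Hb _ Wt); exact: (iotaP _).1.
    move=> eta eta' /teP [[Ft _] Wt] /teP [[Ft' _] Wt'] [e e2].
    rewrite -e in Ft' e2; exact: (iotaP _).2 _ _ Ft Ft' e2.
  pose Y := ~` excl.
  have Ynb : ~ bnd Y.
    move=> Yb; have := bnd_U Yb exclb.
    have -> : Y `|` excl = [set: K].
      by apply/seteqP; split => // eta _; have [|] := pselect (excl eta); [right|left].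
    by move=> /bnd_small; apply; apply: injle_refl.
  have [eta [Yeta Heta]] : exists eta, Y eta /\ injle (seg (cb i)) (fib (G eta)).
    have [//|nH] := pselect (exists eta, Y eta /\ injle (seg (cb i)) (fib (G eta))).
    exfalso; apply: Ynb.
    have /choice [io ioP] : forall A : set T, exists f : K -> K,
        (exists eta, Y eta /\ G eta = A) ->
        (forall x, fib A x -> seg (cb i) (f x)) /\
        (forall x y, fib A x -> fib A y -> f x = f y -> x = y).
      move=> A; have [[eta [Yeta GA]]|ne] := pselect (exists eta, Y eta /\ G eta = A); last first.
        by exists id.
      have [H|[w wc [f [f1 f2]]]] := woc ltwf lttot k0 k0 (seg (cb i)) (fib A).
        by case: nH; exists eta; split => //; rewrite GA.
      exists f => _; split => // x /f1 [_ /= xw]; apply: lttr xw wc.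
    apply: (bnd_le _ (bnd_X Vbnd (seg_bnd (cb i)))).
    exists (fun eta => (G eta, io (G eta) eta)); split.
      move=> eta Yeta; split => //=; apply: (ioP _ _).1 => //.
      by exists eta.
    move=> eta eta' Yeta Yeta' [e e2].
    have ex : exists e0, Y e0 /\ G e0 = G eta by exists eta.
    have f1 : fib (G eta) eta by [].
    have f2 : fib (G eta) eta' by rewrite /fib /= e.
    rewrite -e in e2; exact: (ioP _ ex).2 _ _ f1 f2 e2.
  pose Gm' := Gm `|` [set (i, G eta)].
  have PGm' : PG Gm'.
    split.
    - move=> j A [GA|[-> ->]]; first exact: Gma.
      by split => //; exists eta.
    - move=> j A B [GA|[ej eA]] [GB|[ej' eB]].
      + exact: Gmf GA GB.
      + by case: ndi; exists A; rewrite -ej'.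
      + by case: ndi; exists B; rewrite -ej.
      + by rewrite eA eB.
    - move=> j j' A B t [GA|[ej eA]] [GB|[ej' eB]] At Bt.
      + exact: Gmd GA GB At Bt.
      + exfalso; apply: Yeta; exists t; split; first by rewrite -eB.
        by exists j => //; [exists A | rewrite (Gmf _ _ _ (AofP j (ex_intro _ A GA)) GA)].
      + exfalso; apply: Yeta; exists t; split; first by rewrite -eA.
        by exists j' => //; [exists B | rewrite (Gmf _ _ _ (AofP j' (ex_intro _ B GB)) GB)].
      + by rewrite ej ej'.
    - move=> j A j' [GA|[ej eA]] Ij' ltj.
        by have [B GB] := Gmdown _ _ _ GA Ij' ltj; exists B; left.
      rewrite ej in ltj.
      have [[B GB]|nd] := pselect (exists B, Gm (j', B)); first by exists B; left.
      by case: (ileast j').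
  apply: (Gmax Gm') => //; split; first exact: subsetUl.
  by move=> sub; case: ndi; exists (G eta); apply: sub; right.
have /choice [Ai AiP] : forall i, exists A, I i -> Gm (i, A).
  move=> i; have [Ii|nIi] := pselect (I i); last by exists set0.
  by have [A GA] := domI i Ii; exists A.
have Aiex i : I i -> exists eta, G eta = Ai i.
  by move=> Ii; have [_ H _] := Gma _ _ (AiP i Ii).
have /choice [x xP] : forall i, exists t, I i -> Ai i t.
  move=> i; have [Ii|nIi] := pselect (I i); last by exists t0.
  have [eta <-] := Aiex i Ii; have [t Gt] := Gne eta; by exists t.
have AiU i t : I i -> Ai i t -> U t.
  by move=> Ii; have [eta <-] := Aiex i Ii; case.
have Aidisj i j t : I i -> I j -> Ai i t -> Ai j t -> i = j.
  by move=> Ii Ij; apply: Gmd; apply: AiP.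
pose X := x @` I.
have P1 i eta : I i -> G eta = Ai i -> F eta `&` X = [set x i].
  move=> Ii Ge; apply/seteqP; split => t.
    move=> [Ft [j Ij xj]]; rewrite -xj in Ft *.
    have Gxj : G eta (x j) by split => //; apply: (AiU j) => //; apply: xP.
    rewrite Ge in Gxj.
    by rewrite (Aidisj _ _ _ Ii Ij Gxj (xP _ Ij)).
  move=> ->; split; last by exists i.
  have : G eta (x i) by rewrite Ge; apply: xP.
  by case.
have xinj : {in I &, injective x}.
  move=> i j /set_mem Ii /set_mem Ij e; apply: (Aidisj _ _ (x i) Ii Ij (xP _ Ii)).
  by rewrite e; apply: xP.
have XC : X #= C by apply: card_eq_trans (inj_card_eq xinj) (injle_eq IC CI).
have /choice [io ioP] : forall i, exists f : K -> K, I i ->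
    (forall y, seg (cb i) y -> G (f y) = Ai i) /\
    (forall y y', seg (cb i) y -> seg (cb i) y' -> f y = f y' -> y = y').
  move=> i; have [Ii|nIi] := pselect (I i); last by exists id.
  have [_ _ [f [f1 f2]]] := Gma _ _ (AiP i Ii).
  by exists f => _; split.
have K3 X' : X' `<=` X -> X' #= X -> kappa_many_singletons F X'.
  move=> sub eqX.
  pose I' := [set i | I i /\ X' (x i)].
  have imI' : x @` I' = X'.
    apply/seteqP; split => [_ [i [_ ?] <-] //|y X'y].
    by have [i Ii e] := sub _ X'y; exists i => //; split => //; rewrite e.
  have xinj' : {in I' &, injective x}.
    by move=> a b /set_mem [Ia _] /set_mem [Ib _]; apply: xinj; rewrite inE.
  have CI' : injle C I'.
    apply: (eq_injle k0); apply: card_eq_trans (card_esym XC) _.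
    apply: card_eq_trans (card_esym eqX) _; rewrite -imI'.
    exact: inj_card_eq xinj'.
  have /choice [ie ieP] : forall eta, exists i, I' i /\ lt eta (cb i).
    move=> eta; have [c Cc' ec] := Cc eta.
    have Ihc : I (h c) by apply: hC.
    have [[i [I'i hi]]|nH] := pselect (exists i, I' i /\ le (h c) i).
      exists i; split => //; apply: le_lt_trans ec _.
      by apply: (cbP i I'i.1) => //.
    exfalso; apply: (Ismall _ Ihc); apply: injle_trans CI' (injle_sub _).
    move=> i I'i; apply: nle_lt => hi; apply: nH; exists i; split => //.
  apply: km_of.
  exists (fun eta => io (ie eta) eta); split.
    move=> eta _; have [[Ii X'i] lt_ie] := ieP eta.
    have Ge := (ioP _ Ii).1 _ lt_ie.
    exists (x (ie eta)); apply/seteqP; split => t.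
      by move=> [Ft X't]; rewrite -(P1 _ _ Ii Ge); split => //; apply: sub.
    move=> ->; split => //.
    have : (F (io (ie eta) eta) `&` X) (x (ie eta)) by rewrite (P1 _ _ Ii Ge).
    by case.
  move=> eta eta' _ _ e.
  have [[Ii _] lt_ie] := ieP eta; have [[Ii' _] lt_ie'] := ieP eta'.
  have Ge := (ioP _ Ii).1 _ lt_ie; have Ge' := (ioP _ Ii').1 _ lt_ie'.
  have eii : ie eta = ie eta'.
    apply: (Aidisj _ _ (x (ie eta)) Ii Ii' (xP _ Ii)).
    by rewrite -Ge' -e Ge; apply: xP.
  rewrite -eii in e lt_ie'.
  exact: (ioP _ Ii).2 _ _ lt_ie lt_ie' e.
exists X; split.
- exact: K3.
- right; left; exists C; split => //.
  by move=> C' /Cmin; apply: injle_card.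
- exact: K3.
- move=> _ [i Ii <-]; have [eta Ge] := Aiex i Ii; exists eta; exact: P1.
Qed.


End K.

Unset Implicit Arguments.

Theorem theorem2 (K : Type) (lt : K -> K -> Prop) (T : Type) (F : K -> set T) :
  initial_ordinal lt ->
  infinite_set [set: K] ->
  (forall xi, finite_set (F xi) /\ F xi !=set0) ->
  exists X : set T,
    [/\ kappa_many_singletons F X,
        (X #= [set: unit] \/ card_is_cf lt X \/ X #= [set: K]),
        (forall X' : set T, X' `<=` X -> X' #= X -> kappa_many_singletons F X') &
        (forall x, X x -> exists xi : K, F xi `&` X = [set x])].
Proof.
move=> [irr tr tot wf init] Kinf Fh.
have [k0 _] := infinite_setN0 Kinf.
have init' : forall a, ~ injle [set: K] (seg lt a).
  by move=> a /injle_card; apply: init.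
exact: (mainK irr tr tot wf init' Kinf k0 Fh).
Qed.
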